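(* Let $K\ge2$, $t\in(0,1)$, $\xi(s)=(1+s)^K-1$, and let either $\xi_0(s)=t\xi(s)$ or $\xi_0(s)=\xi(ts)$. Then $\xi_0''(s)<\xi''(|s|)$ for all $s\in[-1,1]\setminus\{0\}$, and the functions $$\zeta_+(s)=\frac{\xi''(s)}{\xi''(s)+\xi_0''(s)},\qquad \zeta_-(s)=\frac{\xi''(s)}{\xi''(s)+\xi_0''(-s)}$$ are nondecreasing on $(0,1]$. *)

(* Defs.v *)
From Stdlib Require Import Reals.
From Coquelicot Require Import Coquelicot.
Open Scope R_scope.

Definition xi (K : nat) (s : R) : R := (1 + s) ^ K - 1.

Definition deriv2 (f : R -> R) (s : R) : R := Derive_n f 2 s.

Definition zeta_plus (K : nat) (xi0 : R -> R) (s : R) : R :=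
  deriv2 (xi K) s / (deriv2 (xi K) s + deriv2 xi0 s).

Definition zeta_minus (K : nat) (xi0 : R -> R) (s : R) : R :=
  deriv2 (xi K) s / (deriv2 (xi K) s + deriv2 xi0 (- s)).

(* Main.v *)
Require Import Defs.
From Stdlib Require Import Reals.
From Stdlib Require Import Lra Lia.
From Coquelicot Require Import Coquelicot.
Open Scope R_scope.
Lemma D1 a b n c s : is_derive (fun s => a*(1+b*s)^n + c) s (a*INR n*b*(1+b*s)^(pred n)).
Proof. auto_derive; [trivial|]. destruct n; simpl; ring. Qed.
Lemma D2 a b m c s : deriv2 (fun s => a*(1+b*s)^(S (S m)) + c) s =
  a*INR(S(S m))*b*INR(S m)*b*(1+b*s)^m.
Proof.
  unfold deriv2. change (Derive (Derive (fun s => a*(1+b*s)^(S (S m)) + c)) s = a*INR(S(S m))*b*INR(S m)*b*(1+b*s)^m).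
  rewrite (Derive_ext _ (fun s => (a*INR(S(S m))*b)*(1+b*s)^(S m) + 0)).
  - apply is_derive_unique. replace (a*INR(S(S m))*b*INR(S m)*b*(1+b*s)^m) with ((a*INR(S(S m))*b)*INR (S m)*b*(1+b*s)^(pred (S m))) by (simpl; ring).
    apply D1.
  - intro u. apply is_derive_unique. replace (a*INR(S(S m))*b*(1+b*u)^(S m) + 0) with (a*INR(S(S m))*b*(1+b*u)^(pred (S(S m)))) by (simpl; ring). apply D1.
Qed.
Lemma powcmp u1 v2 u2 v1 m : 0<=u1 ->0<=v2 -> u1*v2<=u2*v1 -> u1^m*v2^m <= u2^m*v1^m.
Proof. intros. rewrite <- !Rpow_mult_distr. apply pow_incr. split; nra. Qed.
Lemma frac ax bx ay by' : 0<ax -> 0<=bx -> 0<ay -> 0<=by' -> ax*by' <= ay*bx ->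
  ax/(ax+bx) <= ay/(ay+by').
Proof.
  intros. apply Rmult_le_reg_r with ((ax+bx)*(ay+by')). nra.
  replace (ax / (ax + bx) * ((ax + bx) * (ay + by'))) with (ax*(ay+by')) by (field; lra).
  replace (ay / (ay + by') * ((ax + bx) * (ay + by'))) with (ay*(ax+bx)) by (field; lra).
  nra.
Qed.
Lemma pos_pow x m : 0 <= x -> 0 <= x^m.
Proof. intros; apply pow_le; auto. Qed.

Theorem lemma2 (K : nat) (t : R) (xi0 : R -> R) :
  (2 <= K)%nat -> 0 < t < 1 ->
  (xi0 = (fun s => t * xi K s) \/ xi0 = (fun s => xi K (t * s))) ->
  (forall s, -1 <= s <= 1 -> s <> 0 -> deriv2 xi0 s < deriv2 (xi K) (Rabs s)) /\
  (forall x y, 0 < x -> x <= y -> y <= 1 ->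
     zeta_plus K xi0 x <= zeta_plus K xi0 y) /\
  (forall x y, 0 < x -> x <= y -> y <= 1 ->
     zeta_minus K xi0 x <= zeta_minus K xi0 y).
Proof.
  intros HK Ht Hx.
  destruct K as [|[|m]]; [lia|lia|]. clear HK.
  set (c := INR (S (S m)) * INR (S m)).
  assert (Hc : 0 < c) by (unfold c; apply Rmult_lt_0_compat; apply lt_0_INR; lia).
  assert (E : forall s, deriv2 (xi (S (S m))) s = c * (1+s)^m).
  { intro s. unfold xi.
    transitivity (deriv2 (fun s => 1*(1+1*s)^(S (S m)) + -1) s).
    - unfold deriv2. apply Derive_n_ext. intro u. rewrite !Rmult_1_l; ring.
    - rewrite D2. replace (1*s) with s by ring. unfold c; ring. }
  assert (E0 : exists k b, 0 < k /\ 0 < b <= 1 /\ (b = 1 \/ b = t) /\ forall s, deriv2 xi0 s = k * c * t * (1+b*s)^m /\ k <= 1).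
  { destruct Hx as [-> | ->].
    - exists 1, 1. split; [lra|split;[lra|split;[auto|]]]. intro s. split;[|lra].
      transitivity (deriv2 (fun s => t*(1+1*s)^(S (S m)) + -t) s).
      + unfold deriv2. apply Derive_n_ext. intro u. unfold xi. rewrite ?Rmult_1_l; ring.
      + rewrite D2. unfold c; ring.
    - exists t, t. split; [lra|split;[lra|split;[auto|]]]. intro s. split;[|lra].
      transitivity (deriv2 (fun s => 1*(1+t*s)^(S (S m)) + -1) s).
      + unfold deriv2. apply Derive_n_ext. intro u. unfold xi. rewrite ?Rmult_1_l; ring.
      + rewrite D2. unfold c; ring. }
  destruct E0 as [k [b [Hk [Hb [Hbc Hd]]]]].
  assert (Hkct : 0 <= k*c*t) by (apply Rmult_le_pos; [apply Rmult_le_pos|]; lra).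
  split; [|split].
  - intros s Hs Hs0. rewrite E, (proj1 (Hd s)). pose proof (proj2 (Hd s)) as Hk1.
    assert (0 <= 1+b*s <= 1+Rabs s).
    { unfold Rabs; destruct (Rcase_abs s); split; nra. }
    assert (P1 : (1+b*s)^m <= (1+Rabs s)^m) by (apply pow_incr; auto).
    assert (P2 : 0 < (1+Rabs s)^m) by (apply pow_lt; pose proof (Rabs_pos s); lra).
    assert (P3 : 0 <= (1+b*s)^m) by (apply pos_pow; lra).
    assert (0 <= k*t) by nra. assert (k*t < 1) by nra.
    assert (k*t*(1+b*s)^m < (1+Rabs s)^m) by nra. nra.
  - intros x y Hx0 Hxy Hy1. unfold zeta_plus. rewrite !E, (proj1 (Hd x)), (proj1 (Hd y)).
    apply frac.
    + apply Rmult_lt_0_compat; [exact Hc| apply pow_lt; lra].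
    + apply Rmult_le_pos; [exact Hkct | apply pos_pow; nra].
    + apply Rmult_lt_0_compat; [exact Hc| apply pow_lt; lra].
    + apply Rmult_le_pos; [exact Hkct | apply pos_pow; nra].
    + assert ((1+x)^m*(1+b*y)^m <= (1+y)^m*(1+b*x)^m).
      { apply powcmp; nra. }
      assert (0 <= k*c*t*c) by (apply Rmult_le_pos; lra).
      replace (c * (1 + x) ^ m * (k * c * t * (1 + b * y) ^ m)) with ((k*c*t*c) * ((1+x)^m*(1+b*y)^m)) by ring.
      replace (c * (1 + y) ^ m * (k * c * t * (1 + b * x) ^ m)) with ((k*c*t*c) * ((1+y)^m*(1+b*x)^m)) by ring.
      apply Rmult_le_compat_l; assumption.
  - intros x y Hx0 Hxy Hy1. unfold zeta_minus. rewrite !E, (proj1 (Hd (-x))), (proj1 (Hd (-y))).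
    apply frac.
    + apply Rmult_lt_0_compat; [exact Hc| apply pow_lt; lra].
    + apply Rmult_le_pos; [exact Hkct | apply pos_pow; nra].
    + apply Rmult_lt_0_compat; [exact Hc| apply pow_lt; lra].
    + apply Rmult_le_pos; [exact Hkct | apply pos_pow; nra].
    + assert ((1+x)^m*(1+b*-y)^m <= (1+y)^m*(1+b*-x)^m).
      { apply powcmp; nra. }
      assert (0 <= k*c*t*c) by (apply Rmult_le_pos; lra).
      replace (c * (1 + x) ^ m * (k * c * t * (1 + b * -y) ^ m)) with ((k*c*t*c) * ((1+x)^m*(1+b*-y)^m)) by ring.
      replace (c * (1 + y) ^ m * (k * c * t * (1 + b * -x) ^ m)) with ((k*c*t*c) * ((1+y)^m*(1+b*-x)^m)) by ring.
      apply Rmult_le_compat_l; assumption.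
Qed.
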